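(* There is an absolute constant $c>0$ such that for every integer $n\ge1$ and every $q\in(0,\infty)$, $$\sup_{0\ne f\in\mathcal{T}_n}\frac{|f(0)|}{\|f\|_{L_q[0,1]}} \ge c^{1+1/q}(1+qn)^{2/q}.$$
   Context: For an integer $n\ge1$, $\mathcal{T}_n$ denotes the set of all functions $f:\mathbb{R}\to\mathbb{C}$ of the form $f(t)=\sum_{j=1}^n a_j e^{i\lambda_j t}$ with $a_j\in\mathbb{C}$ (possibly zero) and real exponents $\lambda_1<\lambda_2<\cdots<\lambda_n$. $\|f\|_{L_q[0,1]}=(\int_0^1|f(t)|^q\,dt)^{1/q}$. *)

(* Defs.v *)
(* real analysis via Stdlib Reals. Complex numbers are
   represented by pairs (real part, imaginary part). *)
From Stdlib Require Import Reals.
Open Scope R_scope.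

(* Nonnegative real power x^p for x >= 0, with the convention 0^p = 0 (p > 0).
   (Stdlib's Rpower 0 p = 1, which is why we guard it.) *)
Definition rpow (x p : R) : R := if Rle_dec x 0 then 0 else Rpower x p.

(* Real and imaginary parts of the exponential sum
   f(t) = sum_{j<n} a_j e^{i lam_j t}, with a_j = ar j + i ai j. *)
Fixpoint esum_re (n : nat) (ar ai lam : nat -> R) (t : R) : R :=
  match n with
  | O => 0
  | S m => esum_re m ar ai lam t + (ar m * cos (lam m * t) - ai m * sin (lam m * t))
  end.

Fixpoint esum_im (n : nat) (ar ai lam : nat -> R) (t : R) : R :=
  match n with
  | O => 0
  | S m => esum_im m ar ai lam t + (ar m * sin (lam m * t) + ai m * cos (lam m * t))
  end.

Definition esum_abs (n : nat) (ar ai lam : nat -> R) (t : R) : R :=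
  sqrt (Rsqr (esum_re n ar ai lam t) + Rsqr (esum_im n ar ai lam t)).

Definition strictly_incr (n : nat) (lam : nat -> R) : Prop :=
  forall i j : nat, (i < j)%nat -> (j < n)%nat -> lam i < lam j.

(* N = ||g||_{L_q[0,1]} = (int_0^1 |g|^q)^{1/q}, for g given by its modulus. *)
Definition Lq_norm_is (g : R -> R) (q N : R) : Prop :=
  exists pr : Riemann_integrable (fun t => rpow (g t) q) 0 1,
    N = rpow (RiemannInt pr) (1 / q).

(* Main.v *)
Require Import Defs.
From Stdlib Require Import Reals Lra Lia Psatz FunctionalExtensionality ZArith.
Open Scope R_scope.


Lemma esum_add : forall n ar1 ai1 ar2 ai2 lam t,
  esum_re n (fun j => ar1 j + ar2 j) (fun j => ai1 j + ai2 j) lam t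
   = esum_re n ar1 ai1 lam t + esum_re n ar2 ai2 lam t /\
  esum_im n (fun j => ar1 j + ar2 j) (fun j => ai1 j + ai2 j) lam t
   = esum_im n ar1 ai1 lam t + esum_im n ar2 ai2 lam t.
Proof.
  induction n; intros; simpl. split; ring.
  destruct (IHn ar1 ai1 ar2 ai2 lam t) as [H1 H2]; rewrite H1, H2; split; ring.
Qed.

Lemma esum_scal : forall n ar ai lam t a b,
  esum_re n (fun j => a * ar j - b * ai j) (fun j => a * ai j + b * ar j) lam t
   = a * esum_re n ar ai lam t - b * esum_im n ar ai lam t /\
  esum_im n (fun j => a * ar j - b * ai j) (fun j => a * ai j + b * ar j) lam t
   = a * esum_im n ar ai lam t + b * esum_re n ar ai lam t.
Proof.
  induction n; intros; simpl. split; ring.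
  destruct (IHn ar ai lam t a b) as [H1 H2]; rewrite H1, H2; split; ring.
Qed.

Lemma esum_shift : forall n ar ai lam t s,
  esum_re n ar ai (fun j => lam j + s) t
   = cos (s * t) * esum_re n ar ai lam t - sin (s * t) * esum_im n ar ai lam t /\
  esum_im n ar ai (fun j => lam j + s) t
   = sin (s * t) * esum_re n ar ai lam t + cos (s * t) * esum_im n ar ai lam t.
Proof.
  induction n; intros; simpl. split; ring.
  destruct (IHn ar ai lam t s) as [H1 H2]; rewrite H1, H2.
  replace ((lam n + s) * t) with (lam n * t + s * t) by ring.
  rewrite cos_plus, sin_plus; split; ring.
Qed.

Lemma esum_front : forall n ar ai lam t,
  esum_re (S n) ar ai lam t = (ar 0%nat * cos (lam 0%nat * t) - ai 0%nat * sin (lam 0%nat * t))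
    + esum_re n (fun j => ar (S j)) (fun j => ai (S j)) (fun j => lam (S j)) t /\
  esum_im (S n) ar ai lam t = (ar 0%nat * sin (lam 0%nat * t) + ai 0%nat * cos (lam 0%nat * t))
    + esum_im n (fun j => ar (S j)) (fun j => ai (S j)) (fun j => lam (S j)) t.
Proof.
  induction n; intros. simpl. split; ring.
  destruct (IHn ar ai lam t) as [H1 H2].
  change (esum_re (S (S n)) ar ai lam t) with
    (esum_re (S n) ar ai lam t + (ar (S n) * cos (lam (S n) * t) - ai (S n) * sin (lam (S n) * t))).
  change (esum_im (S (S n)) ar ai lam t) with
    (esum_im (S n) ar ai lam t + (ar (S n) * sin (lam (S n) * t) + ai (S n) * cos (lam (S n) * t))).
  rewrite H1, H2. simpl. split; ring.
Qed.

Lemma esum_ext : forall n ar ai lam ar' ai' lam' t,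
  (forall j, (j < n)%nat -> ar j = ar' j /\ ai j = ai' j /\ lam j = lam' j) ->
  esum_re n ar ai lam t = esum_re n ar' ai' lam' t /\
  esum_im n ar ai lam t = esum_im n ar' ai' lam' t.
Proof.
  induction n; intros; simpl. split; ring.
  destruct (IHn ar ai lam ar' ai' lam' t) as [H1 H2].
  intros; apply H; lia.
  destruct (H n) as [E1 [E2 E3]]; [lia|].
  rewrite H1, H2, E1, E2, E3; split; ring.
Qed.

Lemma esum_pad : forall N k ar ai lam t,
  (forall j, (N <= j)%nat -> ar j = 0 /\ ai j = 0) ->
  esum_re (N + k) ar ai lam t = esum_re N ar ai lam t /\
  esum_im (N + k) ar ai lam t = esum_im N ar ai lam t.
Proof.
  induction k; intros. rewrite Nat.add_0_r; split; reflexivity.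
  rewrite Nat.add_succ_r. simpl.
  destruct (IHk ar ai lam t H) as [H1 H2]. destruct (H (N + k)%nat) as [E1 E2]; [lia|].
  rewrite H1, H2, E1, E2. split; ring.
Qed.

Lemma esum_zero : forall n ar ai lam t,
  (forall j, (j < n)%nat -> ar j = 0 /\ ai j = 0) ->
  esum_re n ar ai lam t = 0 /\ esum_im n ar ai lam t = 0.
Proof.
  induction n; intros; simpl. split; ring.
  destruct (IHn ar ai lam t) as [H1 H2]. intros; apply H; lia.
  destruct (H n) as [E1 E2]; [lia|].
  rewrite H1, H2, E1, E2. split; ring.
Qed.

Lemma esum_delta : forall n k c lam t, (k < n)%nat ->
  esum_re n (fun j => if Nat.eqb j k then c else 0) (fun _ => 0) lam t = c * cos (lam k * t) /\
  esum_im n (fun j => if Nat.eqb j k then c else 0) (fun _ => 0) lam t = c * sin (lam k * t).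
Proof.
  induction n; intros. lia.
  simpl. destruct (Nat.eqb n k) eqn:E.
  - apply Nat.eqb_eq in E; subst.
    destruct (esum_zero k (fun j => if Nat.eqb j k then c else 0) (fun _ => 0) lam t) as [H1 H2].
    { intros j Hj. destruct (Nat.eqb j k) eqn:E2; [apply Nat.eqb_eq in E2; lia| split; reflexivity]. }
    rewrite H1, H2; split; ring.
  - apply Nat.eqb_neq in E.
    destruct (IHn k c lam t) as [H1 H2]; [lia|]. rewrite H1, H2; split; ring.
Qed.

Definition lamD (d j : nat) : R := INR j - INR d.
Definition xf (t : R) : R := cos t - sin t.

Definition Rep (d : nat) (h : R -> R) : Prop :=
  exists ar ai : nat -> R,
    (forall j, (2 * d + 1 <= j)%nat -> ar j = 0 /\ ai j = 0) /\
    forall t, esum_re (2 * d + 1) ar ai (lamD d) t = h t /\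
              esum_im (2 * d + 1) ar ai (lamD d) t = 0.

Lemma Rep_const : forall c, Rep 0 (fun _ => c).
Proof.
  intro c. exists (fun j => if Nat.eqb j 0 then c else 0), (fun _ => 0). split.
  - intros j Hj. destruct (Nat.eqb j 0) eqn:E. apply Nat.eqb_eq in E; lia. split; reflexivity.
  - intro t. simpl. unfold lamD. simpl. replace ((0 - 0) * t) with 0 by ring.
    rewrite cos_0, sin_0. split; ring.
Qed.

Definition Ar (ar ai : nat -> R) j := / 2 * ar j - (- / 2) * ai j.
Definition Ai (ar ai : nat -> R) j := / 2 * ai j + (- / 2) * ar j.
Definition Br (ar ai : nat -> R) j :=
  match j with S (S j') => / 2 * ar j' - / 2 * ai j' | _ => 0 end.
Definition Bi (ar ai : nat -> R) j :=
  match j with S (S j') => / 2 * ai j' + / 2 * ar j' | _ => 0 end.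

Lemma Rep_step : forall d h c, Rep d h -> Rep (S d) (fun t => c + xf t * h t).
Proof.
  intros d h c [ar [ai [Hz Hr]]].
  exists (fun j => (Ar ar ai j + Br ar ai j) + (if Nat.eqb j (S d) then c else 0)),
         (fun j => (Ai ar ai j + Bi ar ai j) + 0).
  split.
  - intros j Hj. destruct (Hz j) as [E1 E2]; [lia|].
    unfold Ar, Ai, Br, Bi. rewrite E1, E2.
    destruct (Nat.eqb j (S d)) eqn:E; [apply Nat.eqb_eq in E; lia|].
    destruct j as [|[|j']]; try lia. destruct (Hz j') as [F1 F2]; [lia|].
    rewrite F1, F2. split; ring.
  - intro t.
    destruct (esum_add (2 * S d + 1) (fun j => Ar ar ai j + Br ar ai j) (fun j => Ai ar ai j + Bi ar ai j)
       (fun j => if Nat.eqb j (S d) then c else 0) (fun _ => 0) (lamD (S d)) t) as [S1 S2].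
    rewrite S1, S2; clear S1 S2.
    destruct (esum_add (2 * S d + 1) (Ar ar ai) (Ai ar ai) (Br ar ai) (Bi ar ai) (lamD (S d)) t) as [S1 S2].
    rewrite S1, S2; clear S1 S2.
    destruct (esum_delta (2 * S d + 1) (S d) c (lamD (S d)) t) as [D1 D2]; [lia|].
    rewrite D1, D2; clear D1 D2.
    assert (L0 : lamD (S d) (S d) * t = 0) by (unfold lamD; ring).
    rewrite L0, cos_0, sin_0.
    assert (HA : esum_re (2 * S d + 1) (Ar ar ai) (Ai ar ai) (lamD (S d)) t
                 = cos t * h t / 2 - sin t * h t / 2 /\
                 esum_im (2 * S d + 1) (Ar ar ai) (Ai ar ai) (lamD (S d)) t
                 = - sin t * h t / 2 - cos t * h t / 2).
    { replace (2 * S d + 1)%nat with ((2 * d + 1) + 2)%nat by lia.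
      destruct (esum_pad (2 * d + 1) 2 (Ar ar ai) (Ai ar ai) (lamD (S d)) t) as [P1 P2].
      { intros j Hj. destruct (Hz j Hj) as [E1 E2]. unfold Ar, Ai; rewrite E1, E2; split; ring. }
      rewrite P1, P2.
      destruct (esum_ext (2 * d + 1) (Ar ar ai) (Ai ar ai) (lamD (S d)) (Ar ar ai) (Ai ar ai)
                  (fun j => lamD d j + (-1)) t) as [Q1 Q2].
      { intros j _. split; [reflexivity| split; [reflexivity|]]. unfold lamD; rewrite S_INR; ring. }
      rewrite Q1, Q2.
      destruct (esum_shift (2 * d + 1) (Ar ar ai) (Ai ar ai) (lamD d) t (-1)) as [R1 R2].
      rewrite R1, R2.
      destruct (esum_scal (2 * d + 1) ar ai (lamD d) t (/2) (-/2)) as [T1 T2].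
      unfold Ar, Ai. rewrite T1, T2. destruct (Hr t) as [H1 H2]. rewrite H1, H2.
      replace (-1 * t) with (- t) by ring. rewrite cos_neg, sin_neg. split; field. }
    assert (HB : esum_re (2 * S d + 1) (Br ar ai) (Bi ar ai) (lamD (S d)) t
                 = cos t * h t / 2 - sin t * h t / 2 /\
                 esum_im (2 * S d + 1) (Br ar ai) (Bi ar ai) (lamD (S d)) t
                 = sin t * h t / 2 + cos t * h t / 2).
    { replace (2 * S d + 1)%nat with (S (S (2 * d + 1))) by lia.
      destruct (esum_front (S (2 * d + 1)) (Br ar ai) (Bi ar ai) (lamD (S d)) t) as [P1 P2].
      rewrite P1, P2; clear P1 P2.
      destruct (esum_front (2 * d + 1) (fun j => Br ar ai (S j)) (fun j => Bi ar ai (S j))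
                  (fun j => lamD (S d) (S j)) t) as [P1 P2].
      rewrite P1, P2; clear P1 P2. simpl (Br ar ai 0). simpl (Bi ar ai 0).
      simpl (Br ar ai 1). simpl (Bi ar ai 1).
      destruct (esum_ext (2 * d + 1) (fun j => Br ar ai (S (S j))) (fun j => Bi ar ai (S (S j)))
                 (fun j => lamD (S d) (S (S j)))
                 (fun j => /2 * ar j - /2 * ai j) (fun j => /2 * ai j + /2 * ar j)
                 (fun j => lamD d j + 1) t) as [Q1 Q2].
      { intros j _. split; [reflexivity| split; [reflexivity|]]. unfold lamD; rewrite !S_INR; ring. }
      rewrite Q1, Q2.
      destruct (esum_shift (2 * d + 1) (fun j => /2 * ar j - /2 * ai j) (fun j => /2 * ai j + /2 * ar j)
                 (lamD d) t 1) as [R1 R2].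
      rewrite R1, R2.
      destruct (esum_scal (2 * d + 1) ar ai (lamD d) t (/2) (/2)) as [T1 T2].
      rewrite T1, T2. destruct (Hr t) as [H1 H2]. rewrite H1, H2.
      replace (1 * t) with t by ring. split; field. }
    destruct HA as [A1 A2]; destruct HB as [B1 B2]. rewrite A1, A2, B1, B2.
    unfold xf. split; field.
Qed.

Inductive PD : nat -> (R -> R) -> Prop :=
| PD0 : forall c, PD 0 (fun _ => c)
| PDS : forall d Q c, PD d Q -> PD (S d) (fun x => c + x * Q x).

Lemma PD_ext : forall d Q Q', PD d Q -> (forall x, Q x = Q' x) -> PD d Q'.
Proof. intros. replace Q' with Q; auto. apply functional_extensionality; auto. Qed.

Lemma PD_mono : forall d Q, PD d Q -> PD (S d) Q.
Proof.
  intros d Q H; induction H.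
  - apply PD_ext with (fun x => c + x * (fun _ => 0) x). constructor; constructor. intro; ring.
  - constructor; auto.
Qed.

Lemma PD_le : forall d d' Q, (d <= d')%nat -> PD d Q -> PD d' Q.
Proof. intros d d' Q Hle; induction Hle; intros; auto. apply PD_mono; auto. Qed.

Lemma PD_add : forall d Q1 Q2, PD d Q1 -> PD d Q2 -> PD d (fun x => Q1 x + Q2 x).
Proof.
  intros d Q1 Q2 H1; revert Q2; induction H1; intros Q2 H2; inversion H2; subst.
  - constructor.
  - apply PD_ext with (fun x => (c + c0) + x * (fun y => Q y + Q0 y) x).
    constructor; auto. intro; ring.
Qed.

Lemma PD_scal : forall d Q a, PD d Q -> PD d (fun x => a * Q x).
Proof.
  intros d Q a H; induction H.
  - constructor.
  - apply PD_ext with (fun x => a * c + x * (fun y => a * Q y) x). constructor; auto. intro; ring.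
Qed.

Lemma PD_mul : forall d1 Q1 d2 Q2, PD d1 Q1 -> PD d2 Q2 -> PD (d1 + d2) (fun x => Q1 x * Q2 x).
Proof.
  intros d1 Q1 d2 Q2 H1 H2; induction H1.
  - simpl. apply PD_ext with (fun x => c * Q2 x). apply PD_scal; auto. intro; ring.
  - simpl. apply PD_ext with (fun x => c * Q2 x + (0 + x * (fun y => Q y * Q2 y) x)).
    apply PD_add. apply PD_le with d2; [lia|]. apply PD_scal; auto.
    constructor; auto. intro; ring.
Qed.

Lemma PD_pow : forall d Q p, PD d Q -> PD (p * d) (fun x => Q x ^ p).
Proof.
  intros d Q p H; induction p.
  - simpl. constructor.
  - simpl. apply PD_mul; auto.
Qed.

Lemma PD_const : forall d c, PD d (fun _ => c).
Proof. intros. apply PD_le with 0%nat; [lia|constructor]. Qed.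

Lemma PD_id : PD 1 (fun x => x).
Proof. apply PD_ext with (fun x => 0 + x * (fun _ => 1) x). constructor; constructor. intro; ring. Qed.

Lemma PD_cont : forall d Q, PD d Q -> continuity Q.
Proof.
  intros d Q H; induction H.
  - apply continuity_const. intros x y; reflexivity.
  - apply continuity_plus. apply continuity_const; intros x y; reflexivity.
    apply continuity_mult; auto. apply derivable_continuous, derivable_id.
Qed.

Lemma Rep_PD : forall d Q, PD d Q -> Rep d (fun t => Q (xf t)).
Proof.
  intros d Q H; induction H.
  - apply Rep_const.
  - apply (Rep_step d (fun t => Q (xf t)) c). auto.
Qed.

Lemma Rep_pad : forall d h n, Rep d h -> (2 * d + 1 <= n)%nat ->
  exists ar ai, strictly_incr n (lamD d) /\
   forall t, esum_re n ar ai (lamD d) t = h t /\ esum_im n ar ai (lamD d) t = 0.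
Proof.
  intros d h n [ar [ai [Hz Hr]]] Hn. exists ar, ai. split.
  - intros i j Hij Hj. unfold lamD. apply lt_INR in Hij. lra.
  - intro t. replace n with ((2 * d + 1) + (n - (2 * d + 1)))%nat by lia.
    destruct (esum_pad (2 * d + 1) (n - (2 * d + 1)) ar ai (lamD d) t Hz) as [E1 E2].
    rewrite E1, E2. apply Hr.
Qed.

Fixpoint Tc (k : nat) (x : R) : R :=
  match k with
  | O => 1
  | S k' => match k' with
            | O => x
            | S k'' => 2 * x * Tc k' x - Tc k'' x
            end
  end.

Lemma Tc_cos : forall k th, Tc k (cos th) = cos (INR k * th) /\ Tc (S k) (cos th) = cos (INR (S k) * th).
Proof.
  induction k; intro th.
  - simpl. split. replace (0 * th) with 0 by ring; rewrite cos_0; auto.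
    replace (1 * th) with th by ring; auto.
  - destruct (IHk th) as [H1 H2]. split; auto.
    change (Tc (S (S k)) (cos th)) with (2 * cos th * Tc (S k) (cos th) - Tc k (cos th)).
    rewrite H1, H2. rewrite !S_INR.
    replace ((INR k + 1 + 1) * th) with ((INR k + 1) * th + th) by ring.
    replace (INR k * th) with ((INR k + 1) * th - th) by ring.
    rewrite cos_plus, cos_minus. ring.
Qed.

Lemma Tc_PD : forall k, PD k (Tc k) /\ PD (S k) (Tc (S k)).
Proof.
  induction k.
  - split. simpl. constructor. simpl. apply PD_id.
  - destruct IHk as [H1 H2]. split; auto.
    apply PD_ext with (fun x => (fun y => 2 * y) x * Tc (S k) x + (-1) * Tc k x).
    apply PD_add.
    replace (S (S k)) with (1 + S k)%nat by lia. apply PD_mul; auto.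
    apply PD_scal, PD_id.
    apply PD_le with k; [lia|]. apply PD_scal; auto.
    intro x. simpl. ring.
Qed.

Lemma Tc_one : forall k, Tc k 1 = 1 /\ Tc (S k) 1 = 1.
Proof.
  induction k. simpl; auto. destruct IHk as [H1 H2]; split; auto.
  change (Tc (S (S k)) 1) with (2 * 1 * Tc (S k) 1 - Tc k 1). rewrite H1, H2; ring.
Qed.

Fixpoint sm (m : nat) (f : nat -> R) : R :=
  match m with O => 0 | S k => sm k f + f k end.

Lemma sm_ext : forall m f g, (forall j, (j < m)%nat -> f j = g j) -> sm m f = sm m g.
Proof. induction m; intros; simpl; auto. rewrite (IHm f g), (H m); auto; intros; apply H; lia. Qed.

Lemma sm_add : forall m f g, sm m (fun j => f j + g j) = sm m f + sm m g.
Proof. induction m; intros; simpl. ring. rewrite IHm; ring. Qed.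

Lemma sm_scal : forall m f a, sm m (fun j => a * f j) = a * sm m f.
Proof. induction m; intros; simpl. ring. rewrite IHm; ring. Qed.

Lemma sm_PD : forall m d f, (forall j, (j < m)%nat -> PD d (f j)) -> PD d (fun x => sm m (fun j => f j x)).
Proof.
  induction m; intros; simpl. apply PD_const.
  apply PD_add. apply IHm; intros; apply H; lia. apply H; lia.
Qed.

Definition dist (j l : nat) : nat := (j - l + (l - j))%nat.

Definition Gm (m : nat) (x : R) : R :=
  / (INR m * INR m) * sm m (fun j => sm m (fun l => Tc (dist j l) x)).

Lemma Gm_PD : forall m, PD (m - 1) (Gm m).
Proof.
  intro m. unfold Gm. apply PD_scal.
  apply sm_PD. intros j Hj. apply sm_PD. intros l Hl.
  apply PD_le with (dist j l). unfold dist; lia. apply Tc_PD.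
Qed.

Definition Cs m th := sm m (fun j => cos (INR j * th)).
Definition Ss m th := sm m (fun j => sin (INR j * th)).

Lemma Gm_cos : forall m th, Gm m (cos th) = / (INR m * INR m) * (Cs m th ^ 2 + Ss m th ^ 2).
Proof.
  intros. unfold Gm. f_equal.
  transitivity (sm m (fun j => cos (INR j * th) * Cs m th + sin (INR j * th) * Ss m th)).
  - apply sm_ext. intros j Hj.
    unfold Cs, Ss. rewrite <- !sm_scal, <- sm_add. apply sm_ext. intros l Hl.
    destruct (Tc_cos (dist j l) th) as [E _]. rewrite E. unfold dist.
    destruct (Compare_dec.le_lt_dec j l).
    + replace (j - l)%nat with 0%nat by lia. simpl. rewrite minus_INR by lia.
      replace ((INR l - INR j) * th) with (INR l * th - INR j * th) by ring.
      rewrite cos_minus. ring.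
    + replace (l - j)%nat with 0%nat by lia. rewrite Nat.add_0_r. rewrite minus_INR by lia.
      replace ((INR j - INR l) * th) with (INR j * th - INR l * th) by ring.
      rewrite cos_minus. ring.
  - rewrite sm_add.
    rewrite (sm_ext m (fun j => cos (INR j * th) * Cs m th) (fun j => Cs m th * cos (INR j * th)))
      by (intros; ring).
    rewrite (sm_ext m (fun j => sin (INR j * th) * Ss m th) (fun j => Ss m th * sin (INR j * th)))
      by (intros; ring).
    rewrite !sm_scal. fold (Cs m th). fold (Ss m th). ring.
Qed.

Lemma fej : forall m th,
  (1 - cos th) * Cs m th + sin th * Ss m th = 1 - cos (INR m * th) /\
  (1 - cos th) * Ss m th - sin th * Cs m th = - sin (INR m * th).
Proof.
  induction m; intro th.
  - unfold Cs, Ss; simpl. replace (0 * th) with 0 by ring. rewrite cos_0, sin_0. split; ring.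
  - destruct (IHm th) as [H1 H2]. unfold Cs, Ss in *. simpl sm.
    rewrite S_INR. replace ((INR m + 1) * th) with (INR m * th + th) by ring.
    rewrite cos_plus, sin_plus. split; nra.
Qed.

Lemma fej_bound : forall m th, (Cs m th ^ 2 + Ss m th ^ 2) * (1 - cos th) <= 2.
Proof.
  intros. destruct (fej m th) as [H1 H2].
  set (C := Cs m th) in *. set (Sv := Ss m th) in *.
  assert (E : ((1 - cos th) * C + sin th * Sv) ^ 2 + ((1 - cos th) * Sv - sin th * C) ^ 2
              = 2 * (1 - cos th) * (C ^ 2 + Sv ^ 2)).
  { pose proof (sin2_cos2 th). unfold Rsqr in H. nra. }
  rewrite H1, H2 in E. pose proof (sin2_cos2 (INR m * th)). unfold Rsqr in H.
  pose proof (COS_bound (INR m * th)). nra.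
Qed.

Lemma cs_bound : forall m th, Cs m th ^ 2 + Ss m th ^ 2 <= INR m ^ 2.
Proof.
  induction m; intro th.
  - unfold Cs, Ss; simpl; lra.
  - pose proof (IHm th) as H. unfold Cs, Ss in *. simpl sm. rewrite S_INR.
    set (C := sm m (fun j => cos (INR j * th))) in *.
    set (Sv := sm m (fun j => sin (INR j * th))) in *.
    set (c := cos (INR m * th)). set (s := sin (INR m * th)).
    assert (Hcs : c ^ 2 + s ^ 2 = 1) by (pose proof (sin2_cos2 (INR m * th)); unfold Rsqr in H0; unfold c, s; nra).
    assert (Hm : 0 <= INR m) by apply pos_INR.
    assert (HC : (C * c + Sv * s) ^ 2 <= INR m ^ 2).
    { assert ((C * c + Sv * s) ^ 2 + (C * s - Sv * c) ^ 2 = (C^2 + Sv^2) * (c^2 + s^2)) as E by ring.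
      rewrite Hcs, Rmult_1_r in E. pose proof (pow2_ge_0 (C * s - Sv * c)). lra. }
    assert (C * c + Sv * s <= INR m) by nra.
    nra.
Qed.

Lemma Gm_bounds : forall m th, (1 <= m)%nat ->
  0 <= Gm m (cos th) <= 1 /\ Gm m (cos th) * (1 - cos th) <= 2 / (INR m * INR m).
Proof.
  intros m th Hm. rewrite Gm_cos.
  assert (H1 : 1 <= INR m) by (apply (le_INR 1); lia).
  pose proof (fej_bound m th). pose proof (cs_bound m th).
  assert (0 < INR m * INR m) by nra.
  assert (0 <= Cs m th ^ 2 + Ss m th ^ 2) by nra.
  split; [split|].
  - apply Rmult_le_pos; [left; apply Rinv_0_lt_compat; auto| auto].
  - apply Rmult_le_reg_l with (INR m * INR m); auto.
    rewrite <- Rmult_assoc, Rinv_r by lra. nra.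
  - unfold Rdiv. rewrite Rmult_assoc. rewrite (Rmult_comm 2).
    apply Rmult_le_compat_l; [left; apply Rinv_0_lt_compat; auto| auto].
Qed.

Lemma Gm_one : forall m, (1 <= m)%nat -> Gm m 1 = 1.
Proof.
  intros. replace (Gm m 1) with (Gm m (cos 0)) by (rewrite cos_0; auto). rewrite Gm_cos.
  assert (Cs m 0 = INR m).
  { unfold Cs. clear H. induction m; simpl sm. simpl; auto. rewrite IHm.
    replace (INR m * 0) with 0 by ring. rewrite cos_0. rewrite (S_INR m); ring. }
  assert (Ss m 0 = 0).
  { unfold Ss. clear H H0. induction m; simpl sm. auto. rewrite IHm.
    replace (INR m * 0) with 0 by ring. rewrite sin_0. ring. }
  rewrite H0, H1. assert (1 <= INR m) by (apply (le_INR 1); lia). field. lra.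
Qed.

Lemma xf_props : forall t, 0 <= t <= 1 -> -1 <= xf t <= 1 /\ t / 2 <= 1 - xf t.
Proof.
  intros t Ht. pose proof PI2_3_2. pose proof PI2_1.
  assert (Hs : 0 <= sin t) by (apply sin_ge_0; lra).
  assert (Hc : 0 <= cos t) by (apply cos_ge_0; lra).
  pose proof (sin2_cos2 t). unfold Rsqr in H1.
  pose proof (COS_bound t).
  assert (Hl : t / 2 <= sin t).
  { destruct (sin_bound t 0) as [A _]; try lra.
    unfold sin_approx, sin_term in A. simpl in A. nra. }
  unfold xf. split; [split|]; nra.
Qed.

Definition d0 (m : nat) := 4 / (INR m * INR m).
Definition gq (m : nat) (x : R) := (Gm m x + d0 m / 2) / (1 + d0 m / 2).
Definition Fq (m p : nat) (x : R) := gq m x ^ p.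

Lemma d0_pos : forall m, (1 <= m)%nat -> 0 < d0 m.
Proof.
  intros. assert (1 <= INR m) by (apply (le_INR 1); lia). unfold d0.
  apply Rdiv_lt_0_compat; nra.
Qed.

Lemma pt_bound : forall m t, (1 <= m)%nat -> 0 <= t <= 1 ->
  0 < gq m (xf t) <= 1 /\ gq m (xf t) ^ 2 * (d0 m ^ 2 + t ^ 2) <= 5 * d0 m ^ 2.
Proof.
  intros m t Hm Ht. unfold gq. destruct (xf_props t Ht) as [Hx Hl].
  rewrite <- (cos_acos (xf t) Hx).
  destruct (Gm_bounds m (acos (xf t)) Hm) as [[G0 G1] G2].
  rewrite (cos_acos (xf t) Hx) in *.
  set (G := Gm m (xf t)) in *.
  pose proof (d0_pos m Hm) as Hd.
  assert (HGt : G * t <= d0 m).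
  { unfold d0. replace (4 / (INR m * INR m)) with (2 * (2 / (INR m * INR m))) by (unfold Rdiv; ring).
    assert (G * t <= 2 * (G * (1 - xf t))) by nra. lra. }
  set (e := d0 m / 2) in *. set (dd := d0 m) in *.
  assert (He : 0 < e) by (unfold e; lra).
  assert (Hg1 : (G + e) / (1 + e) <= 1).
  { apply Rmult_le_reg_r with (1 + e); [lra|]. unfold Rdiv; rewrite Rmult_assoc, Rinv_l; lra. }
  assert (Hg0 : 0 < (G + e) / (1 + e)) by (apply Rdiv_lt_0_compat; lra).
  assert (Hg2 : (G + e) / (1 + e) <= G + e).
  { apply Rmult_le_reg_r with (1 + e); [lra|]. unfold Rdiv; rewrite Rmult_assoc, Rinv_l; nra. }
  set (g := (G + e) / (1 + e)) in *.
  split; [lra|].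
  assert (A1 : g ^ 2 * dd ^ 2 <= dd ^ 2) by (assert (g ^ 2 <= 1) by nra; assert (0 <= dd ^ 2) by nra; nra).
  assert (A2 : g * t <= (G + e) * t) by nra.
  assert (A3 : (G + e) * t <= 2 * dd) by (unfold e in *; nra).
  assert (A4 : 0 <= g * t) by nra.
  assert (A5 : g ^ 2 * t ^ 2 <= 4 * dd ^ 2) by nra.
  nra.
Qed.
From Coquelicot Require Import Coquelicot.
Open Scope R_scope.

Lemma int_B : forall d, 0 < d ->
  exists pr : Riemann_integrable (fun t => 5 * d ^ 2 / (d ^ 2 + t ^ 2)) 0 1, RiemannInt pr <= 10 * d.
Proof.
  intros d Hd.
  assert (H : is_RInt (fun t => 5 * d ^ 2 / (d ^ 2 + t ^ 2)) 0 1
                (minus (5 * d * atan (1 / d)) (5 * d * atan (0 / d)))).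
  { apply (is_RInt_derive (fun t => 5 * d * atan (t / d))).
    - intros x _. auto_derive; [auto|]. field. split; [|lra]. nra.
    - intros x _. apply (ex_derive_continuous (K:=R_AbsRing) (V:=R_NormedModule)). auto_derive. nra. }
  exists (ex_RInt_Reals_0 _ _ _ (ex_intro _ _ H)).
  rewrite <- RInt_Reals. rewrite (is_RInt_unique _ _ _ _ H).
  unfold minus, plus, opp; simpl.
  replace (0 / d) with 0 by (field; lra). rewrite atan_0.
  pose proof (atan_bound (1 / d)). pose proof PI_4. nra.
Qed.

Lemma rpow_bound : forall g p q, 0 < g <= 1 -> 0 < q -> 2 <= INR p * q ->
  Rpower (g ^ p) q <= g ^ 2.
Proof.
  intros g p q Hg Hq Hp. unfold Rpower.
  rewrite ln_pow by lra.
  assert (Hl : ln g <= 0) by (rewrite <- ln_1; apply ln_le; lra).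
  rewrite <- (exp_ln (g ^ 2)) by (apply pow_lt; lra).
  rewrite ln_pow by lra.
  assert (L : q * (INR p * ln g) <= INR 2 * ln g) by (simpl; nra).
  destruct (Rle_lt_or_eq_dec _ _ L) as [L'|L'].
  left; apply exp_increasing; auto. right; rewrite L'; auto.
Qed.

Lemma Fq_PD : forall m p, PD (p * (m - 1)) (Fq m p).
Proof.
  intros. unfold Fq. apply PD_pow. unfold gq.
  apply PD_ext with (fun x => / (1 + d0 m / 2) * (Gm m x + d0 m / 2)).
  apply PD_scal, PD_add. apply Gm_PD. apply PD_const.
  intro; unfold Rdiv; ring.
Qed.

Lemma K_cont : forall m p q t, (1 <= m)%nat -> 0 <= t <= 1 ->
  continuity_pt (fun t => exp (q * ln (Fq m p (xf t)))) t.
Proof.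
  intros m p q t Hm Ht.
  assert (Hpos : 0 < Fq m p (xf t)).
  { unfold Fq. apply pow_lt. apply (pt_bound m t Hm Ht). }
  change (continuity_pt (Ranalysis1.comp (fun u => exp (q * ln u)) (fun t => Fq m p (xf t))) t).
  apply continuity_pt_comp.
  - change (continuity_pt (Ranalysis1.comp (Fq m p) xf) t). apply continuity_pt_comp.
    + unfold xf. apply continuity_pt_minus; [apply continuity_cos | apply continuity_sin].
    + apply (PD_cont _ _ (Fq_PD m p)).
  - apply continuity_pt_filterlim.
    assert (HC : continuous (fun u => exp (q * ln u)) (Fq m p (xf t))).
    { apply (ex_derive_continuous (K:=R_AbsRing) (V:=R_NormedModule)).
      auto_derive. exact Hpos. }
    exact HC.
Qed.

Lemma exp_nat : forall k, exp (INR k) = exp 1 ^ k.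
Proof.
  induction k. simpl. apply exp_0.
  rewrite S_INR, exp_plus, IHk. simpl. ring.
Qed.

Lemma ln1000 : ln 1000 <= 10.
Proof.
  assert (H : 1000 <= exp 10).
  { replace 10 with (INR 10) by (simpl; ring). rewrite exp_nat.
    pose proof (exp_ineq1 1 ltac:(lra)).
    assert (2 ^ 10 <= exp 1 ^ 10) by (apply pow_incr; lra). simpl in H0 |- *. lra. }
  rewrite <- (ln_exp 10). apply ln_le; lra.
Qed.

Theorem theorem2p7 :
  exists c : R, 0 < c /\
    forall (n : nat) (q : R), (1 <= n)%nat -> 0 < q ->
      forall y : R,
        y < Rpower c (1 + 1 / q) * Rpower (1 + q * INR n) (2 / q) ->
        exists (ar ai lam : nat -> R) (N : R),
          strictly_incr n lam /\
          (exists t : R, esum_abs n ar ai lam t <> 0) /\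
          Lq_norm_is (esum_abs n ar ai lam) q N /\
          y * N < esum_abs n ar ai lam 0.
Proof.
  exists (exp (-10)). split; [apply exp_pos|].
  intros n q Hn Hq y Hy.
  destruct (archimed (2 / q)) as [Hz1 Hz2].
  assert (Hq2 : 0 < 2 / q) by (apply Rdiv_lt_0_compat; lra).
  assert (Hzpos : (0 < up (2 / q))%Z) by (apply lt_IZR; simpl; lra).
  set (p := Z.to_nat (up (2 / q))).
  assert (Hp : INR p = IZR (up (2 / q))) by (unfold p; rewrite INR_IZR_INZ, Z2Nat.id; [auto|lia]).
  assert (Hp1 : (1 <= p)%nat) by (unfold p; lia).
  assert (Hpq : 2 <= INR p * q).
  { rewrite Hp. apply Rmult_le_reg_r with (/ q). apply Rinv_0_lt_compat; lra.
    rewrite Rmult_assoc, Rinv_r by lra. unfold Rdiv in Hz1. lra. }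
  assert (Hpq2 : INR p * q <= 2 + q).
  { rewrite Hp. assert (IZR (up (2 / q)) <= 2 / q + 1) by lra.
    replace (2 + q) with ((2 / q + 1) * q) by (field; lra). apply Rmult_le_compat_r; lra. }
  set (D := ((n - 1) / 2)%nat).
  set (m := (D / p + 1)%nat).
  assert (HD1 : (2 * D + 1 <= n)%nat).
  { unfold D. pose proof (Nat.div_mod (n - 1) 2 ltac:(lia)). pose proof (Nat.mod_upper_bound (n-1) 2 ltac:(lia)). lia. }
  assert (HD2 : (n <= 2 * D + 2)%nat).
  { unfold D. pose proof (Nat.div_mod (n - 1) 2 ltac:(lia)). pose proof (Nat.mod_upper_bound (n-1) 2 ltac:(lia)). lia. }
  assert (Hm1 : (1 <= m)%nat) by (unfold m; lia).
  assert (Hpm : (p * (m - 1) <= D)%nat).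
  { unfold m. replace (D / p + 1 - 1)%nat with (D / p)%nat by lia. apply Nat.mul_div_le. lia. }
  assert (Hpm2 : (D + 1 <= p * m)%nat).
  { unfold m. pose proof (Nat.div_mod D p ltac:(lia)). pose proof (Nat.mod_upper_bound D p ltac:(lia)). nia. }
  assert (HPD : PD D (Fq m p)) by (apply PD_le with (p * (m - 1))%nat; auto; apply Fq_PD).
  destruct (Rep_pad D (fun t => Fq m p (xf t)) n (Rep_PD _ _ HPD) HD1) as [ar [ai [Hinc Hrep]]].
  assert (Habs : forall t, 0 <= t <= 1 -> esum_abs n ar ai (lamD D) t = Fq m p (xf t)
                                /\ 0 < Fq m p (xf t)).
  { intros t Ht. assert (0 < Fq m p (xf t)) by (unfold Fq; apply pow_lt; apply (pt_bound m t Hm1 Ht)).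
    split; auto. unfold esum_abs. destruct (Hrep t) as [E1 E2]. rewrite E1, E2.
    rewrite Rsqr_0, Rplus_0_r. apply sqrt_Rsqr. lra. }
  assert (Hint : Riemann_integrable (fun t => rpow (esum_abs n ar ai (lamD D) t) q) 0 1).
  { apply Riemann_integrable_ext with (fun t => exp (q * ln (Fq m p (xf t)))).
    - intros x Hx. rewrite Rmin_left, Rmax_right in Hx by lra.
      destruct (Habs x Hx) as [E P]. rewrite E. unfold rpow.
      destruct (Rle_dec (Fq m p (xf x)) 0); [lra|]. reflexivity.
    - apply continuity_implies_RiemannInt; [lra|]. intros; apply K_cont; auto. }
  assert (Hd : 0 < d0 m) by (apply d0_pos; auto).
  destruct (int_B (d0 m) Hd) as [prB HB].
  assert (HI : RiemannInt Hint <= 10 * d0 m).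
  { eapply Rle_trans; [|exact HB]. apply RiemannInt_P19; [lra|].
    intros x Hx. assert (Hx' : 0 <= x <= 1) by lra.
    destruct (Habs x Hx') as [E P]. rewrite E. unfold rpow.
    destruct (Rle_dec (Fq m p (xf x)) 0); [lra|].
    destruct (pt_bound m x Hm1 Hx') as [G1 G2].
    unfold Fq. eapply Rle_trans. apply rpow_bound; auto.
    apply Rmult_le_reg_r with (d0 m ^ 2 + x ^ 2). nra.
    unfold Rdiv. rewrite Rmult_assoc, Rinv_l by nra. lra. }
  assert (H0 : esum_abs n ar ai (lamD D) 0 = 1).
  { destruct (Habs 0 ltac:(lra)) as [E _]. rewrite E. unfold Fq, gq, xf.
    rewrite cos_0, sin_0, Rminus_0_r, Gm_one by auto.
    replace ((1 + d0 m / 2) / (1 + d0 m / 2)) with 1 by (field; lra). apply pow1. }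
  exists ar, ai, (lamD D), (rpow (RiemannInt Hint) (1 / q)).
  split; [auto|]. split; [exists 0; rewrite H0; lra|]. split; [exists Hint; reflexivity|].
  rewrite H0. set (I := RiemannInt Hint) in *. clearbody I. unfold rpow.
  destruct (Rle_dec I 0) as [Hle|Hgt]; [rewrite Rmult_0_r; lra|].
  assert (HN : 0 < Rpower I (1 / q)) by apply exp_pos.
  destruct (Rle_or_lt y 0) as [Hy0|Hy0]; [nra|].
  assert (Hm : 1 <= INR m) by (apply (le_INR 1); auto).
  assert (HqN : 1 + q * INR n <= (5 + 2 * q) * INR m).
  { apply le_INR in HD2. apply le_INR in Hpm2.
    rewrite mult_INR in Hpm2. rewrite plus_INR, mult_INR in HD2. rewrite plus_INR in Hpm2.
    simpl in HD2, Hpm2.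
    assert (q * INR n <= q * (2 * (INR p * INR m))) by (apply Rmult_le_compat_l; lra).
    assert (q * (2 * (INR p * INR m)) <= 2 * (2 + q) * INR m) by nra.
    nra. }
  assert (HnI : (1 + q * INR n) ^ 2 * I <= 1000 * exp (2 * q)).
  { assert (I <= 40 / (INR m * INR m)) by (unfold d0 in HI; lra).
    assert (Hexp : 5 + 2 * q <= 5 * exp q) by (pose proof (exp_ineq1_le q); lra).
    assert (0 <= 1 + q * INR n) by (pose proof (pos_INR n); nra).
    assert ((1 + q * INR n) ^ 2 <= ((5 + 2 * q) * INR m) ^ 2) by (apply pow_incr; lra).
    assert (((5 + 2 * q) * INR m) ^ 2 * I <= 40 * (5 + 2 * q) ^ 2).
    { apply Rle_trans with (((5 + 2 * q) * INR m) ^ 2 * (40 / (INR m * INR m))).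
      apply Rmult_le_compat_l; [nra|lra]. right; field; lra. }
    assert ((5 + 2 * q) ^ 2 <= (5 * exp q) ^ 2) by (apply pow_incr; lra).
    replace (exp (2 * q)) with (exp q ^ 2) by (replace (2 * q) with (q + q) by ring; rewrite exp_plus; ring).
    nra. }
  assert (Hln : 2 * ln (1 + q * INR n) + ln I <= ln 1000 + 2 * q).
  { assert (0 < 1 + q * INR n) by (pose proof (pos_INR n); nra).
    rewrite <- (ln_exp (2 * q)), <- ln_mult by (try apply exp_pos; lra).
    replace (2 * ln (1 + q * INR n)) with (INR 2 * ln (1 + q * INR n)) by (simpl; ring).
    rewrite <- ln_pow, <- ln_mult by (try apply pow_lt; lra).
    apply ln_le; [apply Rmult_lt_0_compat; [apply pow_lt|]; lra| lra]. }
  pose proof ln1000.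
  apply Rlt_le_trans with (Rpower (exp (-10)) (1 + 1 / q) * Rpower (1 + q * INR n) (2 / q) * Rpower I (1 / q)).
  { apply Rmult_lt_compat_r; auto. }
  unfold Rpower. rewrite ln_exp, <- !exp_plus.
  assert (E : (1 + 1 / q) * -10 + 2 / q * ln (1 + q * INR n) + 1 / q * ln I
              = / q * (- 10 * q - 10 + (2 * ln (1 + q * INR n) + ln I))) by (field; lra).
  rewrite E. apply Rle_trans with (exp 0); [|rewrite exp_0; right; reflexivity].
  left. apply exp_increasing.
  assert (0 < / q) by (apply Rinv_0_lt_compat; lra).
  assert (- 10 * q - 10 + (2 * ln (1 + q * INR n) + ln I) < 0) by lra.
  nra.
Qed.
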